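(* Let $\mathcal{Q}$ be a finite poset equipped with the discrete $\sigma$-algebra (all subsets). Then the map \[ \psi\colon \mu\longmapsto \int_{\mathcal{Q}}\dim(-)\,d\mu \] from the set of measures on the discrete $\sigma$-algebra of $\mathcal{Q}$ to the set of additive amplitudes on $\mathrm{Vect}^{\mathcal{Q}}$ is a bijection. That is, for every additive amplitude $\alpha$ on $\mathrm{Vect}^{\mathcal{Q}}$ there is a unique measure $\mu$ on $\mathcal{Q}$ with $\alpha(M)=\int_{\mathcal{Q}}\dim M(q)\,d\mu(q)$ for all $M$.
   Context: $\mathrm{Vect}$ is the category of finite-dimensional vector spaces over a fixed field, and $\mathrm{Vect}^{\mathcal{Q}}$ is the (abelian) category of functors $\mathcal{Q}\to\mathrm{Vect}$ (persistence modules), with $\mathcal{Q}$ viewed as a category. For an abelian category $\mathcal{A}$, an amplitude is a function $\alpha\colon\operatorname{ob}\mathcal{A}\to[0,\infty]$ with $\alpha(0)=0$ such that for every short exact sequence $0\to A\to B\to C\to 0$, $\alpha(A)\le\alpha(B)$, $\alpha(C)\le\alpha(B)$ and $\alpha(B)\le\alpha(A)+\alpha(C)$; it is additive if always $\alpha(B)=\alpha(A)+\alpha(C)$. *)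

(* Defs.v *)
From HB Require Import structures.
From mathcomp Require Import all_boot all_order all_algebra.
From mathcomp Require Import all_classical all_reals all_analysis.

Set Implicit Arguments.
Unset Strict Implicit.
Unset Printing Implicit Defensive.

Import Order.TTheory GRing.Theory Num.Theory.
Local Open Scope ring_scope.

(* Persistence modules: functors Q -> Vect (f.d. vector spaces over F). *)
(* The vector space at q is F^(pdim q) (row vectors 'rV[F]_(pdim q)),   *)
(* and the structure map M(q <= r) acts by right multiplication         *)
(* v |-> v *m pmap q r h.                                               *)
Record pmod (F : fieldType) (d : Order.disp_t) (Q : finPOrderType d) := PMod {
  pdim : Q -> nat;
  pmap : forall q r : Q, (q <= r)%O -> 'M[F]_(pdim q, pdim r);
  pmap_id : forall (q : Q) (h : (q <= q)%O), pmap h = 1%:M;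
  pmap_comp : forall (q r s : Q) (h1 : (q <= r)%O) (h2 : (r <= s)%O)
      (h3 : (q <= s)%O), pmap h3 = pmap h1 *m pmap h2
}.

Definition is_pmorph (F : fieldType) (d : Order.disp_t) (Q : finPOrderType d)
    (M N : pmod F Q) (f : forall q : Q, 'M[F]_(pdim M q, pdim N q)) : Prop :=
  forall (q r : Q) (h : (q <= r)%O), pmap M h *m f r = f q *m pmap N h.

(* Short exact sequence 0 -> A --f--> B --g--> C -> 0 in Vect^Q
   (exactness is checked pointwise, as in a functor category):
   f_q injective, g_q surjective, image f_q = kernel g_q. *)
Definition is_ses (F : fieldType) (d : Order.disp_t) (Q : finPOrderType d)
    (A B C : pmod F Q) : Prop :=
  exists (f : forall q : Q, 'M[F]_(pdim A q, pdim B q))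
         (g : forall q : Q, 'M[F]_(pdim B q, pdim C q)),
    [/\ is_pmorph f, is_pmorph g,
        forall q, row_free (f q),
        forall q, row_full (g q) &
        forall q, (f q == kermx (g q))%MS].

Definition is_zero_pmod (F : fieldType) (d : Order.disp_t) (Q : finPOrderType d)
    (M : pmod F Q) : Prop := forall q, pdim M q = 0%N.

Local Open Scope ereal_scope.

Definition is_amplitude (F : fieldType) (R : realType) (d : Order.disp_t)
    (Q : finPOrderType d) (alpha : pmod F Q -> \bar R) : Prop :=
  [/\ forall M, 0 <= alpha M,
      forall M, is_zero_pmod M -> alpha M = 0 &
      forall A B C, is_ses A B C ->
        [/\ alpha A <= alpha B, alpha C <= alpha B &
            alpha B <= alpha A + alpha C]].

Definition is_additive_amplitude (F : fieldType) (R : realType)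
    (d : Order.disp_t) (Q : finPOrderType d) (alpha : pmod F Q -> \bar R)
    : Prop :=
  is_amplitude alpha /\
  forall A B C, is_ses A B C -> alpha B = alpha A + alpha C.

Local Close Scope ereal_scope.

(* MathComp-Analysis measurable types must be pointed, so a point q0   *)
(* of Q is used.                               *)
Definition discr (d : Order.disp_t) (Q : finPOrderType d) (q0 : Q) : Type := Q.
Arguments discr {d Q} q0.
Section Discr.
Context (d : Order.disp_t) (Q : finPOrderType d) (q0 : Q).
HB.instance Definition _ := Choice.on (discr q0).
HB.instance Definition _ := isPointed.Build (discr q0) q0.
HB.instance Definition _ := @isMeasurable.Build default_measure_display
  (discr q0) discrete_measurable discrete_measurable0
  discrete_measurableC discrete_measurableU.
End Discr.

Lemma discr_measurableE (d : Order.disp_t) (Q : finPOrderType d) (q0 : Q)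
  (A : set (discr q0)) : measurable A.
Proof. by []. Qed.

(* Main.v *)
Require Import Defs.
From HB Require Import structures.
From mathcomp Require Import all_boot all_order all_algebra.
From mathcomp Require Import all_classical all_reals all_analysis.
From mathcomp Require Import zify.

Import Order.TTheory GRing.Theory Num.Theory.

Section Mods.
Variables (F : fieldType) (d : Order.disp_t) (Q : finPOrderType d).
Local Open Scope ring_scope.

Lemma mx_rows0 m n (A B : 'M[F]_(m,n)) : m = 0%N -> A = B.
Proof. by move=> m0; apply/matrixP => i; have := ltn_ord i; lia. Qed.
Lemma mx_cols0 m n (A B : 'M[F]_(m,n)) : n = 0%N -> A = B.
Proof. by move=> n0; apply/matrixP => i j; have := ltn_ord j; lia. Qed.

Definition cdim (q : Q) (k : nat) (r : Q) : nat := if r == q then k else 0%N.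
Lemma cdim_le q k r : (cdim q k r <= k)%N.
Proof. by rewrite /cdim; case: ifP. Qed.
Definition cmap q k (r s : Q) (h : (r <= s)%O) : 'M[F]_(cdim q k r, cdim q k s) :=
  pid_mx k.
Arguments cmap q k {r s} h.
Lemma cmap_id q k (r : Q) (h : (r <= r)%O) : cmap q k h = 1%:M.
Proof.
apply/matrixP => i j; rewrite !mxE (leq_trans (ltn_ord i) (cdim_le _ _ _)) andbT.
by [].
Qed.
Lemma cmap_comp q k (r s t : Q) (h1 : (r <= s)%O) (h2 : (s <= t)%O)
   (h3 : (r <= t)%O) : cmap q k h3 = cmap q k h1 *m cmap q k h2.
Proof.
rewrite /cmap mul_pid_mx !minnn (minn_idPl (cdim_le _ _ _)).
case: (eqVneq s q) => [->|sq]; first by rewrite /cdim eqxx.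
have c0 : cdim q k s = 0%N by rewrite /cdim (negbTE sq).
rewrite c0 pid_mx_0.
case: (eqVneq r q) => [er|rq]; last by apply: mx_rows0; rewrite /cdim (negbTE rq).
case: (eqVneq t q) => [et|tq]; last by apply: mx_cols0; rewrite /cdim (negbTE tq).
subst r t; by rewrite (@le_anti _ _ s q) ?h1 ?h2 ?eqxx in sq.
Qed.
Definition conc q k : pmod F Q := @PMod F d Q (cdim q k) (@cmap q k) (@cmap_id q k) (@cmap_comp q k).

Lemma conc_dimq q k : pdim (conc q k) q = k.
Proof. by rewrite /= /cdim eqxx. Qed.
Lemma conc_dim0 q k r : r != q -> pdim (conc q k) r = 0%N.
Proof. by rewrite /= /cdim => /negbTE ->. Qed.

Section Restr.
Variables (M : pmod F Q) (P : pred Q).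
Definition rdim (r : Q) : nat := if P r then pdim M r else 0%N.
Lemma rdim_le r : (rdim r <= pdim M r)%N.
Proof. by rewrite /rdim; case: ifP. Qed.
Definition rsel r : 'M[F]_(rdim r, pdim M r) := pid_mx (rdim r).
Lemma rsel_tr_mul r : (rsel r)^T *m rsel r = if P r then 1%:M else 0.
Proof.
rewrite /rsel tr_pid_mx mul_pid_mx !minnn /rdim.
case: (P r); [exact: pid_mx_1 | exact: pid_mx_0].
Qed.
Lemma rsel_mul_tr r : rsel r *m (rsel r)^T = 1%:M.
Proof.
by rewrite /rsel tr_pid_mx mul_pid_mx !minnn (minn_idPr (rdim_le _)) pid_mx_1.
Qed.
Definition rmap (r s : Q) (h : (r <= s)%O) : 'M[F]_(rdim r, rdim s) :=
  rsel r *m Defs.pmap M h *m (rsel s)^T.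
Arguments rmap {r s} h.
Lemma rmap_id (r : Q) (h : (r <= r)%O) : rmap h = 1%:M.
Proof. by rewrite /rmap pmap_id mulmx1 rsel_mul_tr. Qed.
Hypothesis HC : forall p r s : Q, (p <= r)%O -> (r <= s)%O -> P p -> P s -> ~~ P r ->
  pdim M r = 0%N \/ pdim M s = 0%N.
Lemma rmap_comp (p r s : Q) (h1 : (p <= r)%O) (h2 : (r <= s)%O)
   (h3 : (p <= s)%O) : rmap h3 = rmap h1 *m rmap h2.
Proof.
rewrite /rmap (pmap_comp M h1 h2 h3).
have -> : rsel p *m Defs.pmap M h1 *m (rsel r)^T *m (rsel r *m Defs.pmap M h2 *m (rsel s)^T)
  = rsel p *m Defs.pmap M h1 *m ((rsel r)^T *m rsel r) *m Defs.pmap M h2 *m (rsel s)^T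
  by rewrite !mulmxA.
rewrite rsel_tr_mul.
case Pr: (P r); first by rewrite mulmx1 !mulmxA.
rewrite mulmx0 mul0mx mul0mx.
case Pp: (P p); last by apply: mx_rows0; rewrite /rdim Pp.
case Ps: (P s); last by apply: mx_cols0; rewrite /rdim Ps.
case: (HC _ _ _ h1 h2 Pp Ps (negbT Pr)) => H0.
  by rewrite (@mx_cols0 _ _ (Defs.pmap M h1) 0 H0) mul0mx mulmx0 mul0mx.
by apply: mx_cols0; rewrite /rdim Ps.
Qed.
Definition restr : pmod F Q := @PMod F d Q rdim (@rmap) rmap_id rmap_comp.
End Restr.


Lemma ses_dim (A B C : pmod F Q) : is_ses A B C ->
  forall q, pdim B q = (pdim A q + pdim C q)%N.
Proof.
case=> f [g [_ _ fr gf ker]] q.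
have := fr q; have := gf q; have := eqmx_rank (ker q).
rewrite /row_free /row_full mxrank_ker => e /eqP gr /eqP frk.
have := rank_leq_row (g q); lia.
Qed.

Lemma ses_mx m n p (e : n = (m + p)%N) :
  {fg : 'M[F]_(m,n) * 'M[F]_(n,p) |
    [/\ row_free fg.1, row_full fg.2 & (fg.1 == kermx fg.2)%MS]}.
Proof.
pose g : 'M[F]_(n,p) := (pid_mx p : 'M[F]_(p,n))^T.
have rg : \rank g = p by rewrite mxrank_tr rank_pid_mx // e leq_addl.
have rk : \rank (kermx g) = m by rewrite mxrank_ker rg e addnK.
exists (castmx (rk, erefl n) (row_base (kermx g)), g) => /=; split.
- by rewrite /row_free eqmx_cast eq_row_base rk.
- by rewrite /row_full rg.
- apply/eqmxP; exact: eqmx_trans (eqmx_cast _ _) (eq_row_base _).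
Qed.
Arguments ses_mx {m n p} e.

Lemma conc_morph q (A B : pmod F Q) (HA : forall r, r != q -> pdim A r = 0%N)
  (HB : forall r, r != q -> pdim B r = 0%N)
  (f : forall r, 'M[F]_(pdim A r, pdim B r)) : @is_pmorph F d Q A B f.
Proof.
move=> r s h; case: (eqVneq r q) => [er|rq]; last by apply: mx_rows0; exact: HA.
case: (eqVneq s q) => [es|sq]; last by apply: mx_cols0; exact: HB.
by subst r s; rewrite !pmap_id mul1mx mulmx1.
Qed.

Lemma conc_ses q (A B C : pmod F Q) (HA : forall r, r != q -> pdim A r = 0%N)
  (HB : forall r, r != q -> pdim B r = 0%N)
  (HC : forall r, r != q -> pdim C r = 0%N)
  (Hq : pdim B q = (pdim A q + pdim C q)%N) : is_ses A B C.
Proof.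
have Hd r : pdim B r = (pdim A r + pdim C r)%N.
  by case: (eqVneq r q) => [->//|rq]; rewrite HA ?HB ?HC.
exists (fun r => (sval (ses_mx (Hd r))).1), (fun r => (sval (ses_mx (Hd r))).2).
split; [exact: (@conc_morph q A B HA HB) | exact: (@conc_morph q B C HB HC) | ..];
  move=> r; by case: (svalP (ses_mx (Hd r))).
Qed.

Section RestrSes.
Variables (M : pmod F Q) (P : pred Q).
Hypothesis H : forall r s : Q, (r <= s)%O -> P r -> ~~ P s -> pdim M s = 0%N.
Lemma restrC1 : forall p r s : Q, (p <= r)%O -> (r <= s)%O -> P p -> P s -> ~~ P r ->
  pdim M r = 0%N \/ pdim M s = 0%N.
Proof. by move=> p r s pr _ Pp _ nPr; left; exact: H pr Pp nPr. Qed.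
Lemma restrC2 : forall p r s : Q, (p <= r)%O -> (r <= s)%O -> (predC P) p -> (predC P) s ->
  ~~ (predC P) r -> pdim M r = 0%N \/ pdim M s = 0%N.
Proof. by move=> p r s _ rs _ /= nPs; rewrite negbK => Pr; right; exact: H rs Pr nPs. Qed.

Lemma restr_ses : is_ses (restr M P restrC1) M (restr M (predC P) restrC2).
Proof.
exists (fun r => rsel M P r), (fun r => (rsel M (predC P) r)^T); split.
- move=> r s h /=; rewrite /rmap -mulmxA rsel_tr_mul.
  case Ps: (P s); first by rewrite mulmx1.
  rewrite mulmx0; case Pr: (P r); last by apply: mx_rows0; rewrite /rdim Pr.
  by apply: mx_cols0; exact: H _ _ h Pr (negbT Ps).
- move=> r s h /=; rewrite /rmap !mulmxA rsel_tr_mul /=.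
  case Pr: (P r) => /=; last by rewrite mul1mx.
  rewrite !mul0mx; case Ps: (P s); first by apply: mx_cols0; rewrite /rdim /= Ps.
  by rewrite (@mx_cols0 _ _ (Defs.pmap M h) 0 (H _ _ h Pr (negbT Ps))) mul0mx.
- by move=> r; rewrite /row_free rank_pid_mx // rdim_le.
- by move=> r; rewrite /row_full mxrank_tr rank_pid_mx // rdim_le.
- move=> r.
  have sub : (rsel M P r <= kermx (rsel M (predC P) r)^T)%MS.
    rewrite sub_kermx /rsel tr_pid_mx mul_pid_mx /rdim /=.
    by case: (P r) => /=; rewrite ?minn0 ?min0n pid_mx_0.
  rewrite -(eq_leqif (mxrank_leqif_eq sub)) mxrank_ker mxrank_tr.
  rewrite /rsel !rank_pid_mx ?rdim_le // /rdim /=.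
  by case: (P r) => /=; rewrite ?subn0 ?subnn.
Qed.
End RestrSes.


Lemma exists_max (M : pmod F Q) : (exists r, pdim M r != 0%N) ->
  exists q, pdim M q != 0%N /\ forall s, (q <= s)%O -> pdim M s != 0%N -> s = q.
Proof.
case=> r0 Hr0.
pose c (x : Q) := #|[pred y : Q | (y <= x)%O]|.
case: (@arg_maxnP Q r0 (fun x => pdim M x != 0%N) c Hr0) => q Hq qmax.
exists q; split => // s qs Hs.
apply/eqP; apply/negPn/negP => sq.
have : (c q < c s)%N.
  apply: proper_card; apply/properP; split.
    by apply/fintype.subsetP => y; rewrite !inE => yq; exact: le_trans yq qs.
  exists s; first by rewrite inE lexx.
  rewrite inE; apply/negP => sq'.
  have := @le_anti _ _ s q; rewrite sq' qs => /(_ isT) esq.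
  by rewrite esq eqxx in sq.
by move=> lt; have := qmax s Hs; lia.
Qed.

End Mods.
Arguments ses_dim {F d Q A B C} H q.
Arguments restr_ses {F d Q M P} H.
Arguments restrC1 {F d Q M P} H.
Arguments restrC2 {F d Q M P} H.
Arguments exists_max {F d Q M}.
Arguments conc_dim0 {F d Q} q k r.
Arguments conc_dimq {F d Q} q k.
Arguments restr {F d Q} M P HC.

Section Key.
Local Open Scope ereal_scope.
Variables (F : fieldType) (d : Order.disp_t) (Q : finPOrderType d) (R : realType).
Variable beta : pmod F Q -> \bar R.
Hypothesis Hb : is_additive_amplitude beta.

Definition tot (M : pmod F Q) := (\sum_(r : Q) pdim M r)%N.
Definition Phi (M : pmod F Q) := \sum_(r : Q) ((pdim M r)%:R)%:E * beta (@conc F d Q r 1).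

Lemma tot_ses {A B C} : is_ses A B C -> tot B = (tot A + tot C)%N.
Proof. by move=> H; rewrite /tot -big_split; apply: eq_bigr => r _; exact: ses_dim. Qed.

Lemma Phi_ses {A B C} : is_ses A B C -> Phi B = Phi A + Phi C.
Proof.
move=> H; rewrite /Phi -big_split /=; apply: eq_bigr => r _.
by rewrite (ses_dim H r) natrD EFinD ge0_muleDl.
Qed.

Lemma Phi_conc1 q : Phi (@conc F d Q q 1) = beta (@conc F d Q q 1).
Proof.
rewrite /Phi (bigD1 q) //= big1 ?adde0; first by rewrite /cdim eqxx mul1e.
by move=> r rq; rewrite /cdim (negbTE rq) mul0e.
Qed.

Lemma tot_conc q k : tot (@conc F d Q q k) = k.
Proof.
rewrite /tot (bigD1 q) //= big1 ?addn0 /cdim ?eqxx // => r rq.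
by rewrite (negbTE rq).
Qed.

Lemma Phi_zero M : is_zero_pmod M -> beta M = Phi M.
Proof.
case: Hb => [[_ bz _] _] z; rewrite bz // /Phi big1 // => r _.
by rewrite z mul0e.
Qed.

Lemma key M : beta M = Phi M.
Proof.
have [[b0 bz bses] badd] := Hb.
suff: forall n M, (tot M <= n)%N -> beta M = Phi M by move=> H; exact: H _ _ (leqnn _).
elim=> [|n IH] {}M HM.
  apply: Phi_zero => r; have : (pdim M r <= tot M)%N by rewrite /tot (bigD1 r) //= leq_addr.
  lia.
case: (pselect (exists r, pdim M r != 0%N)) => [ex|nex]; last first.
  apply: Phi_zero => r; apply/eqP; apply/negPn/negP => Hr; apply: nex; by exists r.
have [q [Hq qmax]] := exists_max ex.
have H : forall r s : Q, (r <= s)%O -> (pred1 q) r -> ~~ (pred1 q) s -> pdim M s = 0%N.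
  move=> r s rs /= /eqP er sq; subst r; apply/eqP; apply/negPn/negP => Hs.
  by rewrite (qmax s rs Hs) eqxx in sq.
set N1 := restr M (pred1 q) (restrC1 H).
set N2 := restr M (predC (pred1 q)) (restrC2 H).
have S1 : is_ses N1 M N2 := restr_ses H.
set k := pdim M q.
have S2 : is_ses (@conc F d Q q k.-1) N1 (@conc F d Q q 1).
  apply: (@conc_ses F d Q q).
  - by move=> r rq; exact: conc_dim0.
  - by move=> r rq /=; rewrite /rdim /= (negbTE rq).
  - by move=> r rq; exact: conc_dim0.
  - rewrite !conc_dimq /= /rdim /= eqxx -/k; lia.
have t1 := tot_ses S1; have t2 := tot_ses S2; rewrite !tot_conc in t2.
rewrite (badd _ _ _ S1) (badd _ _ _ S2) (IH N2) ?(IH (@conc F d Q q k.-1)); last 2 first.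
- rewrite tot_conc; lia.
- lia.
by rewrite -(Phi_conc1 q) -(Phi_ses S2) -(Phi_ses S1).
Qed.

End Key.

Section Meas.
Local Open Scope classical_set_scope.
Local Open Scope ring_scope.
Local Open Scope ereal_scope.
Context (dm : measure_display) (T : measurableType dm) (R : realType).
Variables (I : finType) (m : I -> {measure set T -> \bar R}).

Definition mfsum (A : set T) : \bar R := \sum_(i : I) m i A.

Let mfsum0 : mfsum set0 = 0.
Proof. by rewrite /mfsum big1 // => i _; rewrite measure0. Qed.

Let mfsum_ge0 B : 0 <= mfsum B.
Proof. by rewrite /mfsum; apply: sume_ge0. Qed.

Let mfsum_sigma_additive : semi_sigma_additive mfsum.
Proof.
move=> F mF tF mUF; rewrite [X in _ --> X](_ : _ =
    lim ((fun n => \sum_(0 <= i < n) mfsum (F i)) @ \oo)).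
  by apply: is_cvg_ereal_nneg_natsum => k _; exact: sume_ge0.
rewrite nneseries_sum//; apply: eq_bigr => /= i _.
exact: measure_semi_bigcup.
Qed.

HB.instance Definition _ := isMeasure.Build _ _ _ mfsum
  mfsum0 mfsum_ge0 mfsum_sigma_additive.
End Meas.

Section WDirac.
Local Open Scope classical_set_scope.
Local Open Scope ring_scope.
Local Open Scope ereal_scope.
Context (dm : measure_display) (T : measurableType dm) (R : realType).

Definition wdirac (a : T) (x : \bar R) : {measure set T -> \bar R} :=
  match x with
  | r%:E => mscale (((Num.norm r)%:nng)%R) (\d_a)
  | _ => mseries (fun _ => \d_a) 0
  end.

Lemma ge_nat_pinfty (x : \bar R) : (forall k : nat, (k%:R)%:E <= x) -> x = +oo.
Proof.
case: x => [r| |] H //; last by have := H 0%N.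
have r0 : (0 <= r)%R by have := H 0%N; rewrite lee_fin.
have := H (Num.bound r); rewrite lee_fin => hb.
by have := archi_boundP r0; rewrite ltNge hb.
Qed.

Lemma series1 : \sum_(0 <= k <oo) (1 : \bar R) = +oo.
Proof.
apply: ge_nat_pinfty => k.
apply: le_trans (@nneseries_lim_ge R (fun _ => 1) xpredT 0%N k _); last by [].
rewrite big_const_nat subn0.
suff -> : iter k (+%E 1%E) 0%E = (k%:R)%:E :> \bar R by [].
by elim: k => //= k ->; rewrite -EFinD addrC natr1.
Qed.

Lemma wdiracE a x A : 0 <= x -> wdirac a x A = x * \d_a A.
Proof.
case: x => [r| |] //= x0.
  by rewrite /mscale /= ger0_norm // -lee_fin.
rewrite /mseries diracE.
rewrite (_ : \sum_(0 <= k <oo) _ = \sum_(0 <= k <oo) (((a \in A)%:R)%:E : \bar R)); last first.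
  congr (lim (_ @ \oo)); apply/funext => n; apply: eq_bigr => k _ /=; exact: diracE.
case: (a \in A) => /=.
  by rewrite mule1 series1.
by rewrite mule0 eseries0.
Qed.
End WDirac.

Local Open Scope ring_scope.
Local Open Scope ereal_scope.

Theorem mainTheorem2 (F : fieldType) (R : realType) (d : Order.disp_t)
    (Q : finPOrderType d) (q0 : Q) :
  (forall mu : {measure set (discr q0) -> \bar R},
     is_additive_amplitude
       (fun M : pmod F Q =>
          \int[mu]_(q in [set: discr q0]) ((pdim M q)%:R)%:E)) /\
  (forall alpha : pmod F Q -> \bar R,
     is_additive_amplitude alpha ->
     exists mu : {measure set (discr q0) -> \bar R},
       (forall M : pmod F Q,
          alpha M = \int[mu]_(q in [set: discr q0]) ((pdim M q)%:R)%:E) /\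
       (forall mu' : {measure set (discr q0) -> \bar R},
          (forall M : pmod F Q,
             alpha M = \int[mu']_(q in [set: discr q0]) ((pdim M q)%:R)%:E) ->
          forall A : set (discr q0), mu' A = mu A)).
Proof.
have amp : forall mu : {measure set (discr q0) -> \bar R},
     is_additive_amplitude
       (fun M : pmod F Q =>
          \int[mu]_(q in [set: discr q0]) ((pdim M q)%:R)%:E).
  move=> mu.
  have Iadd : forall A B C : pmod F Q, is_ses A B C ->
      \int[mu]_(q in [set: discr q0]) ((pdim B q)%:R)%:E =
      \int[mu]_(q in [set: discr q0]) ((pdim A q)%:R)%:E +
      \int[mu]_(q in [set: discr q0]) ((pdim C q)%:R)%:E.
    move=> A B C H; rewrite -ge0_integralD //.
    by apply: eq_integral => q _; rewrite (ses_dim H q) natrD EFinD.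
  have I0 : forall M : pmod F Q, 0 <= \int[mu]_(q in [set: discr q0]) ((pdim M q)%:R)%:E.
    by move=> M; apply: integral_ge0 => q _; rewrite lee_fin ler0n.
  split; [split | exact: Iadd].
  - exact: I0.
  - move=> M z; rewrite (eq_integral (cst 0)) ?integral0 // => q _.
    by rewrite z.
  - move=> A B C H; rewrite (Iadd _ _ _ H); split.
    + exact: leeDl.
    + exact: leeDr.
    + exact: lexx.
split; first exact: amp.
move=> alpha Halpha.
pose w (q : Q) := alpha (@conc F d Q q 1).
have w0 q : 0 <= w q by case: Halpha => [[b0 _ _] _]; exact: b0.
pose mu : {measure set (discr q0) -> \bar R} :=
  @mfsum _ _ R Q (fun q : Q => @wdirac _ _ R (q : discr q0) (w q)).
have mu1 (r : discr q0) : mu [set r]%classic = w r.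
  rewrite /mu /= /mfsum (bigD1 r) //= big1 ?adde0.
    by rewrite wdiracE // diracE in_set1 eqxx mule1.
  by move=> q qr; rewrite wdiracE // diracE in_set1 (negbTE qr) mule0.
have Iconc (mu' : {measure set (discr q0) -> \bar R}) (r : Q) :
    \int[mu']_(q in [set: discr q0]) ((pdim (@conc F d Q r 1) q)%:R)%:E = mu' [set r]%classic.
  rewrite (eq_integral (fun q : discr q0 => (\1_([set r]%classic) q)%:E)) ?integral_indic ?setIT //.
  move=> q _; rewrite indicE in_set1 /= /cdim.
  by case: (q == r).
exists mu; split.
- move=> M; rewrite (@key F d Q R alpha Halpha M) (@key F d Q R _ (amp mu) M) /Phi.
  by apply: eq_bigr => r _; rewrite Iconc mu1.
- move=> mu' Hmu' A.
  have e (r : discr q0) : mu' [set r]%classic = mu [set r]%classic by rewrite mu1 -Iconc -Hmu'.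
  have -> : A = (\bigcup_(r in A) [set r])%classic by rewrite bigcup_imset1 image_id.
  rewrite !measure_fin_bigcup //.
  + by apply: eq_fsbigr => r _; exact: e.
  + exact: (@finite_finset Q A).
  + by move=> i j _ _ [x [/= xi xj]]; rewrite -xi -xj.
  + exact: (@finite_finset Q A).
  + by move=> i j _ _ [x [/= xi xj]]; rewrite -xi -xj.
Qed.
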